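(* Let $S=(P,L)$ be a finite $(2,t)$-generalized quadrangle and let $(R,\psi)$ be a faithful representation of $S$ with $\psi(x)=\langle r_x\rangle$. Let $a,b\in P$ be distinct non-collinear points. Set $A=\{r_ar_x: x\in P,\ x\neq a,\ x \text{ not collinear with } a\}$ and $B=\{r_br_x: x\in P,\ x\neq b,\ x\text{ not collinear with } b\}$. Then $|A\cap B|=t+2$.
   Context: A $(2,t)$-generalized quadrangle is a partial linear space in which every line has exactly $3$ points, every point lies on exactly $t+1$ lines, no point is collinear with all points, and for every point $x$ and line $\ell$ with $x\notin\ell$, $x$ is collinear with exactly one point of $\ell$. A representation $(R,\psi)$ of $S$ is a group $R$ with a map $\psi$ assigning to each point $x$ a subgroup $\psi(x)=\langle r_x\rangle$ of order $2$, such that $R$ is generated by the $r_x$ and, for every line $\{x,y,z\}$, $\{1,r_x,r_y,r_z\}$ is a Klein four subgroup. It is faithful if $\psi$ is injective. *)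

(* Defs.v *)
From mathcomp Require Import all_boot.
From Stdlib Require List.

Set Implicit Arguments.
Unset Strict Implicit.
Unset Printing Implicit Defensive.

(* Points form a finite type P; lines are given as a set L of subsets of P
   (a partial linear space is determined by its point-line incidence). *)

Definition collinear (P : finType) (L : {set {set P}}) (x y : P) : bool :=
  [exists l in L, (x \in l) && (y \in l)].

Definition is_GQ2t (P : finType) (L : {set {set P}}) (t : nat) : Prop :=
  [/\
      (forall l, l \in L -> #|l| = 3),
      (forall x : P, #|[set l in L | x \in l]| = t.+1),
      (forall (x y : P) (l1 l2 : {set P}), x != y -> l1 \in L -> l2 \in L ->
          x \in l1 -> y \in l1 -> x \in l2 -> y \in l2 -> l1 = l2),
      (forall x : P, exists y : P, ~~ collinear L x y) &
      (forall (x : P) (l : {set P}), l \in L -> x \notin l ->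
          #|[set y in l | collinear L x y]| = 1)].

Record is_group (G : Type) (mul : G -> G -> G) (one : G) (inv : G -> G) : Prop :=
  { grp_assoc : forall x y z, mul x (mul y z) = mul (mul x y) z;
    grp_mul1g : forall x, mul one x = x;
    grp_mulg1 : forall x, mul x one = x;
    grp_mulVg : forall x, mul (inv x) x = one;
    grp_mulgV : forall x, mul x (inv x) = one }.

(* {1, a, b, c} is a Klein four subgroup: four distinct elements, closed under
   multiplication, every element of exponent dividing 2 (a subgroup of order 4
   that is not cyclic, i.e. isomorphic to Z2 x Z2). *)
Definition klein4 (G : Type) (mul : G -> G -> G) (one : G) (a b c : G) : Prop :=
  let S := fun g => g = one \/ g = a \/ g = b \/ g = c in
  [/\ List.NoDup (one :: a :: b :: c :: nil),
      (forall g h, S g -> S h -> S (mul g h)) &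
      (forall g, S g -> mul g g = one)].

Definition is_representation (P : finType) (L : {set {set P}})
  (G : Type) (mul : G -> G -> G) (one : G) (r : P -> G) : Prop :=
  [/\
      (forall x, r x <> one /\ mul (r x) (r x) = one),
      (forall g : G, exists s : seq P, g = foldr (fun x acc => mul (r x) acc) one s) &
      (forall (l : {set P}) (x y z : P), l \in L -> l = [set x; y; z] ->
          klein4 mul one (r x) (r y) (r z))].

(* faithful: psi injective; since <r x> = <r y> iff r x = r y for involutions *)
Definition faithful_rep (P : finType) (G : Type) (r : P -> G) : Prop :=
  forall x y, r x = r y -> x = y.

Definition opp_set (P : finType) (L : {set {set P}}) (G : Type)
  (mul : G -> G -> G) (r : P -> G) (a : P) : G -> Prop :=
  fun g => exists x : P, [/\ x != a, ~~ collinear L a x & g = mul (r a) (r x)].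

Definition has_card (G : Type) (S : G -> Prop) (n : nat) : Prop :=
  exists s : seq G, [/\ List.NoDup s, (forall g, List.In g s <-> S g) & size s = n].

(* Main.v *)
Require Import Defs.
From mathcomp Require Import all_boot.
Set Implicit Arguments.
Unset Strict Implicit.
Unset Printing Implicit Defensive.

Section GQ.
Variables (P : finType) (L : {set {set P}}) (t : nat).
Hypothesis HGQ : is_GQ2t L t.
Local Notation coll := (collinear L).

Definition line3 (p q z : P) := exists2 l, l \in L & l = [set p; q; z].

Lemma coll_refl x : coll x x.
Proof.
case: HGQ => _ H2 _ _ _.
have : 0 < #|[set l in L | x \in l]| by rewrite H2.
case/card_gt0P => l; rewrite inE => /andP[lL xl].
by apply/existsP; exists l; rewrite lL xl.
Qed.

Lemma coll_sym x y : coll x y = coll y x.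
Proof.
by apply/existsP/existsP => -[l /andP[lL /andP[h1 h2]]]; exists l; rewrite lL h1 h2.
Qed.

Lemma opp_sym x y : ~~ coll x y -> ~~ coll y x.
Proof. by rewrite coll_sym. Qed.

Lemma coll_in l x y : l \in L -> x \in l -> y \in l -> coll x y.
Proof. by move=> lL xl yl; apply/existsP; exists l; rewrite lL xl yl. Qed.

Lemma opp_neq x y : ~~ coll x y -> x != y.
Proof. by apply: contra => /eqP ->; apply: coll_refl. Qed.

Lemma set3C (p q z : P) : [set p; q; z] = [set q; p; z].
Proof. by apply/setP => w; rewrite !inE; case: (w == p); case: (w == q). Qed.
Lemma set3R (p q z : P) : [set p; q; z] = [set p; z; q].
Proof. by apply/setP => w; rewrite !inE; case: (w == q); case: (w == z); rewrite ?orbT. Qed.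

Lemma line3C p q z : line3 p q z -> line3 q p z.
Proof. by case=> l lL El; exists l; rewrite // El set3C. Qed.
Lemma line3R p q z : line3 p q z -> line3 p z q.
Proof. by case=> l lL El; exists l; rewrite // El set3R. Qed.
Lemma line3_rot p q z : line3 p q z -> line3 q z p.
Proof. by move=> /line3C /line3R. Qed.

Lemma line3_neq p q z : line3 p q z -> [/\ p != q, p != z & q != z].
Proof.
case=> l lL El; case: HGQ => H1 _ _ _ _.
have := H1 _ lL; rewrite El => c3.
have le2 (u v : P) : #|[set u; v]| <= 2 by rewrite cards2; case: (u != v).
split; apply/negP => /eqP E.
- suff : #|[set p; q; z]| <= 2 by rewrite c3.
  suff -> : [set p; q; z] = [set p; z] by [].
  by apply/setP => w; rewrite !inE -E orbb.
- suff : #|[set p; q; z]| <= 2 by rewrite c3.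
  suff -> : [set p; q; z] = [set p; q] by [].
  by apply/setP => w; rewrite !inE -E; case: (w == p); rewrite ?orbT ?orbF.
- suff : #|[set p; q; z]| <= 2 by rewrite c3.
  suff -> : [set p; q; z] = [set p; q] by [].
  by apply/setP => w; rewrite !inE -E -orbA orbb.
Qed.

Lemma line3_coll p q z : line3 p q z -> coll p q.
Proof. by case=> l lL El; apply: (coll_in lL); rewrite El !inE eqxx ?orbT. Qed.

Lemma line3_coll13 p q z : line3 p q z -> coll p z.
Proof. by move/line3R/line3_coll. Qed.
Lemma line3_coll23 p q z : line3 p q z -> coll q z.
Proof. by move/line3C/line3R/line3_coll. Qed.

Lemma tri p q z w : line3 p q z -> coll w p -> coll w q -> [|| w == p, w == q | w == z].
Proof.
move=> Hl wp wq; case: (Hl) => l lL El.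
have [pq _ _] := line3_neq Hl.
case: (boolP (w \in l)) => [|wl]; first by rewrite El !inE orbA.
case: HGQ => _ _ _ _ H5; have := H5 w l lL wl.
move/eqP/cards1P => [x0 Ex0].
have : p \in [set y in l | coll w y] by rewrite inE wp andbT El !inE eqxx.
have : q \in [set y in l | coll w y] by rewrite inE wq andbT El !inE eqxx orbT.
by rewrite Ex0 !inE => /eqP Eq /eqP Ep; rewrite Eq Ep eqxx in pq.
Qed.

Lemma opp2 p q z w : line3 p q z -> ~~ coll w p -> ~~ coll w q -> coll w z.
Proof.
move=> Hl wp wq; case: (Hl) => l lL El.
case: (boolP (w \in l)) => [|wl].
  rewrite El !inE => /orP[/orP[]|] /eqP E; subst.
  - by rewrite coll_refl in wp.
  - by rewrite coll_refl in wq.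
  - exact: coll_refl.
case: HGQ => _ _ _ _ H5; have := H5 w l lL wl.
move/eqP/cards1P => [x0 Ex0].
have : x0 \in [set y in l | coll w y] by rewrite Ex0 inE.
rewrite inE El !inE => /andP[/orP[/orP[]|] /eqP -> //] H.
- by rewrite H in wp.
- by rewrite H in wq.
Qed.

Lemma line3_uniq p q z z' : line3 p q z -> line3 p q z' -> z' = z.
Proof.
move=> H H'; have [_ a b] := line3_neq H'.
have := tri H (etrans (coll_sym _ _) (line3_coll13 H')) (etrans (coll_sym _ _) (line3_coll23 H')).
by rewrite eq_sym (negbTE a) eq_sym (negbTE b) /= => /eqP.
Qed.

Lemma line_pt l b : l \in L -> b \in l -> exists u v, line3 b u v /\ l = [set b; u; v].
Proof.
move=> lL bl; case: HGQ => H1 _ _ _ _.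
have c2 : #|l :\ b| = 2 by have := cardsD1 b l; rewrite H1 // bl add1n => -[].
have : 1 < #|l :\ b| by rewrite c2.
case/card_gt1P => u [v [uin vin uv]].
have E2 : l :\ b = [set u; v].
  apply/eqP; rewrite eq_sym eqEcard c2 cards2 uv andbT.
  by apply/subsetP => w; rewrite in_set2 => /orP[] /eqP ->.
have El : l = [set b; u; v].
  rewrite -(setD1K bl) E2; apply/setP => w; rewrite !inE; by rewrite orbA.
by exists u, v; split => //; exists l.
Qed.

Lemma coll_line3 p q : p != q -> coll p q -> exists z, line3 p q z.
Proof.
move=> pq /existsP [l /andP[lL /andP[pl ql]]].
have [u [v [H El]]] := line_pt lL pl.
have [pu pv uv] := line3_neq H.
move: ql; rewrite El !inE eq_sym (negbTE pq) /= => /orP[] /eqP E.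
- by exists v; rewrite E.
- by exists u; rewrite E; apply: line3R.
Qed.

Lemma opp_thirds c p p' q q' : line3 c p p' -> line3 c q q' -> ~~ coll p q -> ~~ coll p' q'.
Proof.
move=> H1 H2 pq; apply/negP => H.
have [cq cq' qq'] := line3_neq H2.
have q'c : coll q' c by rewrite coll_sym; exact: line3_coll13 H2.
have q'p' : coll q' p' by rewrite coll_sym.
have := tri (line3R H1) q'c q'p'.
case/orP => [/eqP E|/orP[] /eqP E].
- by rewrite E eqxx in cq'.
- have qc : coll q c by rewrite coll_sym; exact: line3_coll H2.
  have qp' : coll q p' by rewrite -E; exact: line3_coll23 H2.
  have := tri (line3R H1) qc qp'.
  case/orP => [/eqP E2|/orP[] /eqP E2].
  + by rewrite E2 eqxx in cq.
  + by move: pq; rewrite E2 (line3_coll23 H1).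
  + by move: pq; rewrite E2 coll_refl.
- by move: pq; rewrite -E coll_sym (line3_coll23 H2).
Qed.

Lemma perp_opp a b c d : ~~ coll a b -> c != d -> coll c a -> coll c b -> coll d a -> coll d b ->
  ~~ coll c d.
Proof.
move=> ab cd ca cb da db; apply/negP => H.
have [e He] := coll_line3 cd H.
have ha := tri He (etrans (coll_sym _ _) ca) (etrans (coll_sym _ _) da).
have hb := tri He (etrans (coll_sym _ _) cb) (etrans (coll_sym _ _) db).
have acd : (a != c) && (a != d).
  by apply/andP; split; apply/negP => /eqP E; move: ab; rewrite E ?cb ?db.
have bcd : (b != c) && (b != d).
  by apply/andP; split; apply/negP => /eqP E; move: ab; rewrite E coll_sym ?ca ?da.
case/andP: acd => /negbTE h1 /negbTE h2; case/andP: bcd => /negbTE h3 /negbTE h4.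
move: ha hb; rewrite h1 h2 h3 h4 /= => /eqP Ea /eqP Eb.
by move: ab; rewrite Ea Eb coll_refl.
Qed.

Lemma two_perp p q : ~~ coll p q -> exists c d, [/\ c != d, coll c p, coll c q, coll d p & coll d q].
Proof.
move=> pq; case: (HGQ) => H1 H2 H3 _ H5.
have : 0 < #|[set l in L | p \in l]| by rewrite H2.
case/card_gt0P => l1; rewrite inE => /andP[l1L pl1].
have ql1 : q \notin l1 by apply: contra pq => ql1; apply: (coll_in l1L).
have := H5 q l1 l1L ql1; move/eqP/cards1P => [c Ec].
have : c \in [set y in l1 | coll q y] by rewrite Ec inE.
rewrite inE => /andP[cl1 qc].
have cq : c != q by apply: contraNneq ql1 => <-.
have /existsP [m /andP[mL /andP[cm qm]]] := qc.
have ml1 : m != l1 by apply: contraNneq ql1 => <-.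
have gt1 : 1 < #|[set l in L | p \in l]|.
  rewrite H2 -(H2 c).
  apply: (@leq_trans #|[set m; l1]|); first by rewrite cards2 ml1.
  apply: subset_leq_card; by apply/subsetP => w; rewrite !inE => /orP[] /eqP ->; rewrite ?mL ?cm ?l1L ?cl1.
have [l2 [l2L pl2 l21]] : exists l2, [/\ l2 \in L, p \in l2 & l2 != l1].
  case/card_gt1P: gt1 => x [y [xin yin xy]].
  move: xin yin; rewrite !inE => /andP[xL px] /andP[yL py].
  case: (eqVneq x l1) => [Ex|xl1]; last by exists x.
  by exists y; split => //; rewrite -Ex eq_sym.
have ql2 : q \notin l2 by apply: contra pq => ql2; apply: (coll_in l2L).
have := H5 q l2 l2L ql2; move/eqP/cards1P => [d Ed].
have : d \in [set y in l2 | coll q y] by rewrite Ed inE.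
rewrite inE => /andP[dl2 qd].
exists c, d; split.
- apply/negP => /eqP E; subst d.
  have pc : p != c by apply: contraNneq pq => ->; rewrite coll_sym.
  by move: l21; rewrite (H3 p c l2 l1 pc l2L l1L pl2 dl2 pl1 cl1) eqxx.
- exact: (coll_in l1L).
- by rewrite coll_sym.
- exact: (coll_in l2L).
- by rewrite coll_sym.
Qed.

Variables (G : Type) (mul : G -> G -> G) (one : G) (inv : G -> G) (r : P -> G).
Hypothesis Hg : is_group mul one inv.
Hypothesis Hrep : is_representation L mul one r.
Hypothesis Hfaith : faithful_rep r.
Local Notation "x ** y" := (mul x y) (at level 40, left associativity).

Lemma mulA x y z : x ** (y ** z) = x ** y ** z.
Proof. exact: (grp_assoc Hg). Qed.
Lemma mul1 x : one ** x = x.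
Proof. exact: (grp_mul1g Hg). Qed.
Lemma mul1r x : x ** one = x.
Proof. exact: (grp_mulg1 Hg). Qed.

Lemma cancel_l x y z : x ** y = x ** z -> y = z.
Proof.
move=> E; rewrite -[y]mul1 -[z]mul1 -(grp_mulVg Hg x) -!mulA.
by rewrite E.
Qed.
Lemma cancel_r x y z : y ** x = z ** x -> y = z.
Proof.
move=> E; rewrite -[y]mul1r -[z]mul1r -(grp_mulgV Hg x) !mulA.
by rewrite E.
Qed.

Lemma rr x : r x ** r x = one.
Proof. by case: Hrep => H _ _; case: (H x). Qed.
Lemma r_neq1 x : r x <> one.
Proof. by case: Hrep => H _ _; case: (H x). Qed.
Lemma r_inj x y : r x = r y -> x = y.
Proof. exact: Hfaith. Qed.

Lemma klein p q z : line3 p q z -> r z = r p ** r q.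
Proof.
move=> Hl; case: (Hl) => l lL El; have [pq pz qz] := line3_neq Hl.
case: Hrep => _ _ Hk; have [_ Hcl _] := Hk l p q z lL El.
have := Hcl (r p) (r q) (or_intror (or_introl erefl)) (or_intror (or_intror (or_introl erefl))).
case => [E|[E|[E|E]]] //.
- have : r p ** r q = r p ** r p by rewrite E rr.
  by move/cancel_l/r_inj => E2; rewrite E2 eqxx in pq.
- have : r p ** r q = r p ** one by rewrite E mul1r.
  by move/cancel_l/r_neq1.
- have : r p ** r q = one ** r q by rewrite E mul1.
  by move/cancel_r/r_neq1.
Qed.

Lemma comm_line p q z : line3 p q z -> r p ** r q = r q ** r p.
Proof. by move=> H; rewrite -(klein H) -(klein (line3C H)). Qed.

Lemma gridA p q c d cp dq : ~~ coll p q -> ~~ coll c d -> d != p -> c != q ->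
  line3 c p cp -> line3 d q dq -> coll c q -> coll d p ->
  [/\ ~~ coll cp q, ~~ coll cp d & coll cp dq].
Proof.
move=> pq cd dp cq Hc Hd cq' dp'.
have f1 : ~~ coll cp q.
  apply/negP => H.
  have := tri (line3R Hc) (etrans (coll_sym _ _) cq') (etrans (coll_sym _ _) H).
  case/orP => [/eqP E|/orP[] /eqP E].
  - by rewrite E eqxx in cq.
  - by move: pq; rewrite E (line3_coll23 Hc).
  - by move: pq; rewrite E coll_refl.
have f2 : ~~ coll cp d.
  apply/negP => H.
  have := tri (line3R (line3C Hc)) dp' (etrans (coll_sym _ _) H).
  case/orP => [/eqP E|/orP[] /eqP E].
  - by rewrite E eqxx in dp.
  - by move: cd; rewrite E (line3_coll13 Hc).
  - by move: cd; rewrite E coll_refl.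
by split => //; apply: (opp2 Hd).
Qed.

Lemma gridB p q c d cp cq dq w : ~~ coll p q -> ~~ coll c d -> d != p -> c != q ->
  line3 c p cp -> line3 d q dq -> coll c q -> coll d p ->
  line3 c q cq -> line3 cp dq w -> ~~ coll w c /\ coll w cq.
Proof.
move=> pq cd dp cnq Hc Hd cq' dp' Hcq0 Hw.
have [f1 f2 f3] := gridA pq cd dp cnq Hc Hd cq' dp'.
have [g1 g2 g3] := gridA (p:=q) (q:=p) (c:=d) (d:=c) (cp:=dq) (dq:=cp)
   (opp_sym pq) (opp_sym cd) cnq dp Hd Hc dp' cq'.
have f5 : ~~ coll w c.
  apply/negP => H.
  have := tri (line3R Hw) (line3_coll13 Hc) (etrans (coll_sym _ _) H).
  case/orP => [/eqP E|/orP[] /eqP E].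
  - by have [_ hh _] := line3_neq Hc; rewrite E eqxx in hh.
  - by move: g2; rewrite E (line3_coll23 Hw).
  - by move: g2; rewrite E coll_refl.
have f6 : ~~ coll w q.
  apply/negP => H.
  have := tri (line3_rot Hw) (line3_coll23 Hd) (etrans (coll_sym _ _) H).
  case/orP => [/eqP E|/orP[] /eqP E].
  - by have [_ _ hh] := line3_neq Hd; rewrite E eqxx in hh.
  - by move: f1; rewrite E (line3_coll13 Hw).
  - by move: f1; rewrite E coll_refl.
by split => //; apply: (opp2 Hcq0).
Qed.

Lemma comm_opp p q : ~~ coll p q -> r p ** r q = r q ** r p.
Proof.
move=> pq; have [c [d [cd cp_ cq_ dp_ dq_]]] := two_perp pq.
have ncd := perp_opp pq cd cp_ cq_ dp_ dq_.
have cnp : c != p by apply/negP => /eqP E; move: pq; rewrite -E cq_.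
have cnq : c != q by apply/negP => /eqP E; move: pq; rewrite -E coll_sym cp_.
have dnp : d != p by apply/negP => /eqP E; move: pq; rewrite -E dq_.
have dnq : d != q by apply/negP => /eqP E; move: pq; rewrite -E coll_sym dp_.
have [cp Hcp] := coll_line3 cnp cp_.
have [cq Hcq] := coll_line3 cnq cq_.
have [dp Hdp] := coll_line3 dnp dp_.
have [dq Hdq] := coll_line3 dnq dq_.
have [f1 f2 f3] := gridA pq ncd dnp cnq Hcp Hdq cq_ dp_.
have cpdq : cp != dq.
  by apply/negP => /eqP E; move: f2; rewrite E coll_sym (line3_coll13 Hdq).
have [w Hw] := coll_line3 cpdq f3.
have [w1 w2] := gridB pq ncd dnp cnq Hcp Hdq cq_ dp_ Hcq Hw.
have [w3 w4] := gridB (p:=q) (q:=p) (c:=d) (d:=c) (cp:=dq) (cq:=dp) (dq:=cp) (w:=w)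
   (opp_sym pq) (opp_sym ncd) cnq dnp Hdq Hcp dp_ cq_ Hdp (line3C Hw).
have [h1 h2 h3] := gridA (p:=q) (q:=p) (c:=c) (d:=d) (cp:=cq) (dq:=dp)
   (opp_sym pq) ncd dnq cnp Hcq Hdp cp_ dq_.
have cqdp : cq != dp.
  by apply/negP => /eqP E; move: h2; rewrite E coll_sym (line3_coll13 Hdp).
have [w' Hw'] := coll_line3 cqdp h3.
have : [|| w == cq, w == dp | w == w'] by apply: (tri Hw').
case/orP => [/eqP E|/orP[] /eqP E].
- by move: w1; rewrite E coll_sym (line3_coll13 Hcq).
- by move: w3; rewrite E coll_sym (line3_coll13 Hdp).
rewrite -E in Hw'.
have E1 : r cp ** r dq = r cq ** r dp by rewrite -(klein Hw) -(klein Hw').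
rewrite (klein Hcp) (klein Hdq) (klein Hcq) (klein Hdp) -!mulA in E1.
move/cancel_l: E1; rewrite !mulA -(comm_line Hdp) -(comm_line Hdq).
by rewrite -!mulA => /cancel_l.
Qed.

Lemma comm_r p q : r p ** r q = r q ** r p.
Proof.
case: (eqVneq p q) => [->//|pq].
case: (boolP (coll p q)) => [H|H]; last exact: comm_opp.
by have [z Hz] := coll_line3 pq H; apply: comm_line Hz.
Qed.

Lemma comm_gr g x : g ** r x = r x ** g.
Proof.
case: Hrep => _ Hgen _; have [s ->] := Hgen g.
elim: s => [|y s IH] /=; first by rewrite mul1 mul1r.
by rewrite -mulA IH !mulA comm_r.
Qed.

Lemma comm_g g h : g ** h = h ** g.
Proof.
case: Hrep => _ Hgen _; have [s ->] := Hgen h.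
elim: s => [|y s IH] /=; first by rewrite mul1 mul1r.
by rewrite mulA comm_gr -mulA IH mulA.
Qed.

Lemma rel_swap p q u v : r p ** r q = r u ** r v -> r p ** r u = r q ** r v.
Proof.
move=> E; apply: (cancel_l (x := r q)).
rewrite mulA (comm_g (r q) (r p)) E (comm_g (r u ** r v) (r u)).
by rewrite !mulA !rr !mul1.
Qed.

Lemma rel_alt p q u v : r p ** r q = r u ** r v -> r p ** r v = r u ** r q.
Proof.
by move=> E; rewrite (comm_g (r u)); apply: rel_swap; rewrite E comm_g.
Qed.

Lemma thirds_rel c p p' q q' : line3 c p p' -> line3 c q q' -> r p' ** r q' = r p ** r q.
Proof.
move=> Hp Hq; rewrite (klein (line3R Hp)) (klein (line3R Hq)).
rewrite (comm_g (r c) (r p')) -!mulA; congr (_ ** _).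
by rewrite mulA rr mul1.
Qed.

Lemma one_coll p q z w : line3 p q z -> coll w p -> w != p -> ~~ coll w q -> ~~ coll w z.
Proof.
move=> Hl wp wnp wq; apply/negP => H.
have := tri (line3R Hl) wp H; case/orP => [/eqP E|/orP[] /eqP E].
- by rewrite E eqxx in wnp.
- by move: wq; rewrite E coll_sym (line3_coll23 Hl).
- by move: wq; rewrite E coll_refl.
Qed.

Lemma engine p q z u v : line3 p q z -> r z = r u ** r v -> ~~ coll u v -> coll u p || coll u q.
Proof.
move=> Hl Ez uv.
have zu : ~~ coll z u.
  apply/negP => H.
  have zneu : z != u.
    apply/negP => /eqP E; rewrite E in Ez.
    have : r u ** one = r u ** r v by rewrite mul1r.
    by move/cancel_l => E2; apply: (r_neq1 (x := v)).
  have [w Hw] := coll_line3 zneu H.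
  have : r w = r v by rewrite (klein Hw) Ez (comm_g (r u) (r v)) -mulA rr mul1r.
  move/r_inj => E; rewrite E in Hw.
  by move: uv; rewrite (line3_coll23 Hw).
case: (boolP (coll u p || coll u q)) => // /norP [up uq].
by have := opp2 Hl up uq; rewrite coll_sym (negbTE zu).
Qed.

Lemma lemM p q u v c : ~~ coll p q -> ~~ coll p u -> ~~ coll p v -> ~~ coll q u -> ~~ coll q v ->
  ~~ coll u v -> r p ** r q = r u ** r v -> coll c p -> coll c q -> ~~ coll c u -> False.
Proof.
move=> pq pu pv qu qv uv E cp_ cq_ cu.
have cnp : c != p by apply/negP => /eqP Ec; move: pq; rewrite -Ec cq_.
have cnq : c != q by apply/negP => /eqP Ec; move: pq; rewrite -Ec coll_sym cp_.
have [p' Hp] := coll_line3 cnp cp_.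
have [q' Hq] := coll_line3 cnq cq_.
have E' : r p' ** r q' = r u ** r v by rewrite (thirds_rel Hp Hq).
have up' : coll u p' := opp2 Hp (opp_sym cu) (opp_sym pu).
have uq' : coll u q' := opp2 Hq (opp_sym cu) (opp_sym qu).
have npq' : ~~ coll p' q' := opp_thirds Hp Hq pq.
have unp' : u != p' by apply/negP => /eqP Eu; move: pu; rewrite Eu (line3_coll23 Hp).
have [z Hz] := coll_line3 unp' up'.
have Ez : r z = r v ** r q'.
  by rewrite (klein Hz) (comm_g (r u)) (rel_swap E') comm_g.
case: (boolP (coll c v)) => cv.
- have vnc : v != c by apply/negP => /eqP Ev; move: pv; rewrite Ev coll_sym cp_.
  have vp' : ~~ coll v p' := one_coll Hp (etrans (coll_sym _ _) cv) vnc (opp_sym pv).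
  have vq' : ~~ coll v q' := one_coll Hq (etrans (coll_sym _ _) cv) vnc (opp_sym qv).
  have := engine Hz Ez vq'.
  by rewrite coll_sym (negbTE uv) (negbTE vp').
- have vp' : coll v p' := opp2 Hp (opp_sym cv) (opp_sym pv).
  have vq' : coll v q' := opp2 Hq (opp_sym cv) (opp_sym qv).
  have q'nv : q' != v by apply/negP => /eqP Ev; move: qv; rewrite -Ev (line3_coll23 Hq).
  have [w Hw] := coll_line3 q'nv (etrans (coll_sym _ _) vq').
  have : r w = r z by rewrite Ez (klein Hw) comm_g.
  move/r_inj => Ewz; rewrite Ewz in Hw.
  have := tri (line3R Hz) (etrans (coll_sym _ _) uq') (line3_coll13 Hw).
  case/orP => [/eqP E2|/orP[] /eqP E2].
  + by move: cu; rewrite -E2 (line3_coll13 Hq).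
  + by move: npq'; rewrite E2 (line3_coll23 Hz).
  + by move: npq'; rewrite E2 coll_refl.
Qed.

Lemma lemM' p q u v c : ~~ coll p q -> ~~ coll p u -> ~~ coll p v -> ~~ coll q u -> ~~ coll q v ->
  ~~ coll u v -> r p ** r q = r u ** r v -> coll c p -> coll c q -> ~~ coll c v -> False.
Proof.
move=> pq pu pv qu qv uv E; apply: (lemM pq pv pu qv qu (opp_sym uv)).
by rewrite E comm_g.
Qed.

Lemma fwd a b x y : ~~ coll a b -> ~~ coll a x -> ~~ coll b y -> r a ** r x = r b ** r y -> coll b x.
Proof.
move=> ab ax byy E; case: (boolP (coll b x)) => // bx; exfalso.
have any : a != y.
  apply/negP => /eqP Ey; rewrite -Ey (comm_g (r b)) in E.
  by move/cancel_l/r_inj: E => Ex; move: bx; rewrite Ex coll_refl.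
have xny : x != y.
  apply/negP => /eqP Ey; rewrite -Ey in E.
  by move/cancel_r/r_inj: E => Ea; move: ab; rewrite Ea coll_refl.
case: (boolP (coll a y)) => ay.
  have [z Hz] := coll_line3 any ay.
  have Ez : r z = r b ** r x by rewrite (klein Hz) (rel_alt E).
  by have := engine Hz Ez bx; rewrite coll_sym (negbTE ab) (negbTE byy).
have Erel := rel_swap E.
case: (boolP (coll x y)) => xy.
  have [z Hz] := coll_line3 xny xy.
  have Ez : r z = r b ** r a by rewrite (klein Hz) -Erel comm_g.
  by have := engine Hz Ez (opp_sym ab); rewrite (negbTE bx) (negbTE byy).
have [c [d [cd ca cb da db]]] := two_perp ab.
have key e : coll e a -> coll e b -> coll e x && coll e y.
  move=> ea eb.
  case: (boolP (coll e x)) => ex; last by exfalso; exact: (lemM ab ax ay bx byy xy Erel ea eb ex).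
  case: (boolP (coll e y)) => ey; last by exfalso; exact: (lemM' ab ax ay bx byy xy Erel ea eb ey).
  by [].
have /andP[cx cy] := key c ca cb.
have /andP[dx dy] := key d da db.
have ncd := perp_opp ab cd ca cb da db.
have cna : c != a by apply/negP => /eqP Ec; move: ab; rewrite -Ec cb.
have cnb : c != b by apply/negP => /eqP Ec; move: ab; rewrite -Ec coll_sym ca.
have cnx : c != x by apply/negP => /eqP Ec; move: ax; rewrite -Ec coll_sym ca.
have cny : c != y by apply/negP => /eqP Ec; move: ay; rewrite -Ec coll_sym ca.
have dnx : d != x by apply/negP => /eqP Ec; move: ax; rewrite -Ec coll_sym da.
have dna : d != a by apply/negP => /eqP Ec; move: ab; rewrite -Ec db.
have dnb : d != b by apply/negP => /eqP Ec; move: ab; rewrite -Ec coll_sym da.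
have [ac Hac] := coll_line3 cna ca.
have [bc Hbc] := coll_line3 cnb cb.
have [xc Hxc] := coll_line3 cnx cx.
have [yc Hyc] := coll_line3 cny cy.
have [xd Hxd] := coll_line3 dnx dx.
have o1 := opp_thirds Hac Hbc ab.
have o2 := opp_thirds Hac Hxc ax.
have o3 := opp_thirds Hac Hyc ay.
have o4 := opp_thirds Hbc Hxc bx.
have o5 := opp_thirds Hbc Hyc byy.
have o6 := opp_thirds Hxc Hyc xy.
have E2 : r ac ** r bc = r xc ** r yc by rewrite (thirds_rel Hac Hbc) (thirds_rel Hxc Hyc).
have xnc : x != c by rewrite eq_sym.
have xac : ~~ coll x ac := one_coll Hac (etrans (coll_sym _ _) cx) xnc (opp_sym ax).
have dac : ~~ coll d ac := one_coll (line3C Hac) da dna (opp_sym ncd).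
have xbc : ~~ coll x bc := one_coll Hbc (etrans (coll_sym _ _) cx) xnc (opp_sym bx).
have dbc : ~~ coll d bc := one_coll (line3C Hbc) db dnb (opp_sym ncd).
have h1 : coll xd ac by rewrite coll_sym; exact: opp2 Hxd (opp_sym dac) (opp_sym xac).
have h2 : coll xd bc by rewrite coll_sym; exact: opp2 Hxd (opp_sym dbc) (opp_sym xbc).
have h3 : ~~ coll xd xc.
  have Hxc' : line3 x c xc by apply: line3C.
  have Hxd' : line3 x d xd by apply: line3C.
  exact: opp_thirds Hxd' Hxc' (opp_sym ncd).
exact: (lemM o1 o2 o3 o4 o5 o6 E2 h1 h2 h3).
Qed.

Lemma bwd a b x : ~~ coll a b -> coll b x -> ~~ coll a x ->
  exists y, [/\ y != b, ~~ coll b y & r a ** r x = r b ** r y].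
Proof.
move=> ab bx ax.
case: (eqVneq x b) => [->|xb].
  by exists a; split; [exact: opp_neq ab | exact: opp_sym | exact: comm_g].
have bnx : b != x by rewrite eq_sym.
have [c Hl] := coll_line3 bnx bx.
have ac : coll a c := opp2 Hl ab ax.
have anc : a != c by apply/negP => /eqP Ea; move: ab; rewrite Ea coll_sym (line3_coll13 Hl).
have [y Hy] := coll_line3 anc ac.
have [_ bnc _] := line3_neq Hl.
have bc : coll b c := line3_coll13 Hl.
have nby : ~~ coll b y := one_coll (line3C Hy) bc bnc (opp_sym ab).
exists y; split => //.
  by rewrite eq_sym; apply: opp_neq.
rewrite (klein (line3R Hl)) (klein Hy).
by rewrite !mulA (comm_g (r a) (r b)).
Qed.

Section Count.
Variables (a b : P).
Hypothesis ab : ~~ coll a b.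

Definition ptl (l : {set P}) : P := odflt b [pick x in l | (x != b) && ~~ coll a x].

Lemma ptl_spec l : l \in L -> b \in l -> [/\ ptl l \in l, ptl l != b & ~~ coll a (ptl l)].
Proof.
move=> lL bl; have [u [v [Hl El]]] := line_pt lL bl.
have [bu bv uv] := line3_neq Hl.
rewrite /ptl; case: pickP => [x /andP[xl /andP[xb ax]] | none] /=; first by [].
exfalso.
have nu := none u; have nv := none v.
rewrite El !inE eqxx orbT /= eq_sym bu /= in nu.
rewrite El !inE eqxx orbT /= eq_sym bv /= in nv.
move/negbFE: nu => au; move/negbFE: nv => av.
have := tri (line3_rot Hl) au av.
case/orP => [/eqP E|/orP[] /eqP E].
- by move: ab; rewrite E coll_sym (line3_coll Hl).
- by move: ab; rewrite E coll_sym (line3_coll13 Hl).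
- by move: ab; rewrite E coll_refl.
Qed.

Lemma ptl_uniq l x : l \in L -> b \in l -> x \in l -> x != b -> ~~ coll a x -> x = ptl l.
Proof.
move=> lL bl xl xb ax; have [yl yb ay] := ptl_spec lL bl.
move: (ptl l) yl yb ay => y yl yb ay.
have [u [v [Hl El]]] := line_pt lL bl.
move: xl yl; rewrite El !inE (negbTE xb) (negbTE yb) /=.
have H2 : ~~ coll a u -> ~~ coll a v -> False.
  by move=> au av; move: ab; rewrite (opp2 (line3_rot Hl) au av).
case/orP => /eqP Ex; case/orP => /eqP Ey; rewrite ?Ex ?Ey //; exfalso; apply: H2; rewrite -?Ex -?Ey //; by rewrite -Ex -Ey.
Qed.

Lemma count_X : #|[set x | coll b x && ~~ coll a x]| = t + 2.
Proof.
case: (HGQ) => _ H2 H3 _ _.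
set X' := [set x | (x != b) && coll b x && ~~ coll a x].
have EX : [set x | coll b x && ~~ coll a x] = b |: X'.
  apply/setP => x; rewrite !inE.
  case: (eqVneq x b) => [->|xb] //=.
  by rewrite coll_refl ab.
have bX' : b \notin X' by rewrite inE eqxx.
rewrite EX cardsU1 bX'.
have -> : X' = [set ptl l | l in [set l in L | b \in l]].
  apply/setP => x; rewrite inE; apply/idP/idP.
  - case/andP => /andP[xb /existsP[l /andP[lL /andP[bl xl]]]] ax.
    apply/imsetP; exists l; first by rewrite inE lL bl.
    exact: ptl_uniq.
  - case/imsetP => l; rewrite inE => /andP[lL bl] ->.
    have [h1 h2 h3] := ptl_spec lL bl.
    by rewrite h2 h3 (coll_in lL bl h1).
rewrite card_in_imset ?H2 ?addn2 //.
move=> l1 l2; rewrite !inE => /andP[l1L bl1] /andP[l2L bl2] E.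
have [h1 h2 h3] := ptl_spec l1L bl1.
have [g1 g2 g3] := ptl_spec l2L bl2.
by apply: (H3 (ptl l1) b l1 l2 h2 l1L l2L h1 bl1); rewrite ?E.
Qed.
End Count.

End GQ.


Lemma NoDup_map_in (T : eqType) (U : Type) (f : T -> U) (s : seq T) :
  uniq s -> {in s &, injective f} -> List.NoDup (map f s).
Proof.
elim: s => [|x s IH] /=; first by constructor.
case/andP => xs us inj; constructor.
- move=> Hin.
  have : exists y, y \in s /\ f x = f y.
    clear IH inj xs us; elim: s Hin => [|z s IH2] //= [E|H].
    + by exists z; rewrite inE eqxx.
    + by have [y [ys E]] := IH2 H; exists y; rewrite inE ys orbT.
  case=> y [ys E]; move/inj: E; rewrite !inE eqxx ys orbT => /(_ isT isT) E.
  by move: xs; rewrite E ys.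
- apply: IH => // y z ys zs; apply: inj; by rewrite inE ?ys ?zs orbT.
Qed.

Lemma In_map_iff (T : eqType) (U : Type) (f : T -> U) (s : seq T) g :
  List.In g (map f s) <-> exists x, x \in s /\ g = f x.
Proof.
elim: s => [|x s IH] /=; first by split => // -[y []].
split.
- case=> [<-|/IH [y [ys E]]]; first by exists x; rewrite inE eqxx.
  by exists y; rewrite inE ys orbT.
- case=> y []; rewrite inE => /orP[/eqP ->|ys] E; first by left.
  by right; apply/IH; exists y.
Qed.

Theorem lemma3p8 (P : finType) (L : {set {set P}}) (t : nat)
  (G : Type) (mul : G -> G -> G) (one : G) (inv : G -> G) (r : P -> G)
  (a b : P) :
  is_GQ2t L t ->
  is_group mul one inv ->
  is_representation L mul one r ->
  faithful_rep r ->
  a != b -> ~~ collinear L a b ->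
  has_card (fun g => opp_set L mul r a g /\ opp_set L mul r b g) (t + 2).
Proof.
move=> HGQ Hg Hrep Hf _ nab.
set X := [set x | collinear L b x && ~~ collinear L a x].
exists (map (fun x => mul (r a) (r x)) (enum X)); split.
- apply: NoDup_map_in; first exact: enum_uniq.
  move=> x y _ _ /(cancel_l Hg) E; exact: Hf.
- move=> g; rewrite In_map_iff; split.
  + case=> x []; rewrite mem_enum inE => /andP[bx ax] ->; split.
    * exists x; split => //; rewrite eq_sym; exact: (opp_neq HGQ ax).
    * have [y [yb byy E]] := bwd HGQ Hg Hrep Hf nab bx ax.
      by exists y; split.
  + case=> [[x [xa ax E1]] [y [yb byy E2]]].
    have bx : collinear L b x.
      apply: (fwd HGQ Hg Hrep Hf nab ax byy); by rewrite -E1 -E2.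
    by exists x; rewrite mem_enum inE bx ax.
- by rewrite size_map -cardE (count_X HGQ nab).
Qed.
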